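(* Let $n$ individuals be connected by a directed graph with in-neighborhoods $\mathcal N_i$ (self-loops allowed), and suppose the potential outcomes are linear: $Y_i(\mathbf z)=c_{i,\emptyset}+\sum_{j\in\mathcal N_i}c_{ij}z_j$. Let $\mathrm{TTE}=\frac1n\sum_i(Y_i(\mathbf 1)-Y_i(\mathbf 0))$. Suppose a staggered rollout Bernoulli design is implemented with $T+1$ distinct treatment probabilities $0\le p_0<p_1<\dots<p_T\le1$ ($u_i\sim U[0,1]$ i.i.d., $z_i^t=\mathbb I(u_i\le p_t)$), and the outcomes $Y_i(\mathbf z^t)$ are observed without noise. Then among estimators of the form $$\widehat{\mathrm{TTE}}=\frac1n\sum_{i=1}^n\sum_{t=0}^T\alpha_tY_i(\mathbf z^t)$$ (with constants $\alpha_t$) that are unbiased for $\mathrm{TTE}$, the one minimizing variance has $\alpha_0=\frac{-1}{p_T-p_0}$, $\alpha_T=\frac1{p_T-p_0}$, and $\alpha_1=\dots=\alpha_{T-1}=0$.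
   Context: Unbiasedness is understood as $\mathbb E[\widehat{\mathrm{TTE}}]=\mathrm{TTE}$ for every choice of the linear model coefficients $c_{i,\emptyset},c_{ij}$. *)

(* Defs.v *)
From HB Require Import structures.
From mathcomp Require Import all_boot all_order all_algebra.
From mathcomp Require Import all_classical all_reals all_analysis.
Set Implicit Arguments. Unset Strict Implicit. Unset Printing Implicit Defensive.
Import Order.TTheory GRing.Theory Num.Theory.
Local Open Scope classical_set_scope.
Local Open Scope ring_scope.

Section Defs.
Context {d : measure_display} {Omega : measurableType d} {R : realType}.
Variable (P : probability Omega R).

Definition iid_uniform01 (n : nat) (u : 'I_n -> {RV P >-> R}) : Prop :=
  (forall (J : {set 'I_n}) (B : 'I_n -> set R), (forall i, measurable (B i)) ->
     P (\bigcap_(i in [set i | i \in J]) (u i @^-1` B i)) =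
     (\prod_(i in J) P (u i @^-1` B i))%E) /\
  (forall i (A : set R), measurable A ->
     P (u i @^-1` A) = lebesgue_measure (A `&` `[0, 1]%classic)).

Definition Y (n : nat) (N : 'I_n -> {set 'I_n}) (c0 : 'I_n -> R)
  (c : 'I_n -> 'I_n -> R) (i : 'I_n) (z : 'I_n -> R) : R :=
  c0 i + \sum_(j in N i) c i j * z j.

Definition TTE (n : nat) (N : 'I_n -> {set 'I_n}) (c0 : 'I_n -> R)
  (c : 'I_n -> 'I_n -> R) : R :=
  n%:R^-1 * \sum_(i < n) (Y N c0 c i (fun _ => 1) - Y N c0 c i (fun _ => 0)).

Definition zt (n T : nat) (u : 'I_n -> {RV P >-> R}) (p : 'I_T.+1 -> R)
  (t : 'I_T.+1) (w : Omega) : 'I_n -> R :=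
  fun j => if u j w <= p t then 1 else 0.

Definition est (n T : nat) (u : 'I_n -> {RV P >-> R}) (N : 'I_n -> {set 'I_n})
  (p : 'I_T.+1 -> R) (alpha : 'I_T.+1 -> R) (c0 : 'I_n -> R)
  (c : 'I_n -> 'I_n -> R) (w : Omega) : R :=
  n%:R^-1 * \sum_(i < n) \sum_(t < T.+1) alpha t * Y N c0 c i (zt u p t w).

Definition unbiased (n T : nat) (u : 'I_n -> {RV P >-> R})
  (N : 'I_n -> {set 'I_n}) (p : 'I_T.+1 -> R) (alpha : 'I_T.+1 -> R) : Prop :=
  forall (c0 : 'I_n -> R) (c : 'I_n -> 'I_n -> R),
    ('E_P[est u N p alpha c0 c] = (TTE N c0 c)%:E)%E.

End Defs.

Definition alpha_opt {R : realType} (T : nat) (p : 'I_T.+1 -> R) (t : 'I_T.+1) : R :=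
  if t == ord0 then - (p ord_max - p ord0)^-1
  else if t == ord_max then (p ord_max - p ord0)^-1 else 0.
Arguments iid_uniform01 {d Omega R} P {n} u.
Arguments unbiased {d Omega R} P {n T} u N p alpha.

(* Main.v *)
Require Import Defs.
From HB Require Import structures.
From mathcomp Require Import all_boot all_order all_algebra.
From mathcomp Require Import all_classical all_reals all_analysis.
From mathcomp Require Import ring lra zify.
Import Order.TTheory GRing.Theory Num.Theory.
Local Open Scope classical_set_scope.
Local Open Scope ring_scope.
Set Implicit Arguments. Unset Strict Implicit.

Section Infra.
Context {d : measure_display} {Omega : measurableType d} {R : realType}.
Variable (P : probability Omega R).

Definition Ex (f : Omega -> R) (r : R) :=
  f \in Lfun P 1 /\ 'E_P[f]%E = r%:E.

Lemma Ex_ext f g r : Ex f r -> (forall w, f w = g w) -> Ex g r.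
Proof. by move=> h e; have -> : g = f by apply/funext=> w; rewrite e. Qed.

Lemma Ex_cst c : Ex (fun _ => c) c.
Proof. by split; [exact: Lfun_cst | exact: expectation_cst]. Qed.

Lemma Ex_ind (A : set Omega) r : measurable A -> P A = r%:E ->
  Ex (\1_A) r.
Proof.
move=> mA PA; split; last by rewrite expectation_indic.
by apply/Lfun1_integrable; exact: (integrable_indic P mA).
Qed.

Lemma Ex_add f g a b : Ex f a -> Ex g b -> Ex (fun w => f w + g w) (a + b).
Proof.
move=> [f1 fe] [g1 ge]; split; first exact: (rpredD f1 g1).
by rewrite (expectationD f1 g1) fe ge.
Qed.

Lemma Ex_scale f a k : Ex f a -> Ex (fun w => k * f w) (k * a).
Proof.
move=> [f1 fe]; split.
have -> : (fun w => k * f w) = k \o* f by apply/funext => w /=; rewrite mulrC.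
  by apply: Lfun_scale.
have -> : (fun w => k * f w) = k \o* f by apply/funext => w /=; rewrite mulrC.
by rewrite (expectationZl _ f1) fe.
Qed.

Lemma Ex_sum (I : eqType) (s : seq I) (Pr : pred I) (F : I -> Omega -> R) (e : I -> R) :
  (forall i, Ex (F i) (e i)) ->
  Ex (fun w => \sum_(i <- s | Pr i) F i w) (\sum_(i <- s | Pr i) e i).
Proof.
move=> h; elim: s => [|a s IH].
  by rewrite big_nil; apply: Ex_ext (Ex_cst 0) _ => w; rewrite big_nil.
rewrite big_cons; case: (boolP (Pr a)) => Pa.
  by apply: Ex_ext (Ex_add (h a) IH) _ => w; rewrite big_cons Pa.
by apply: Ex_ext IH _ => w; rewrite big_cons (negbTE Pa).
Qed.


Variables (n : nat) (u : 'I_n -> {RV P >-> R}).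
Hypothesis Hu : iid_uniform01 P u.

Lemma set_le j x : [set w | u j w <= x] = u j @^-1` `]-oo, x]%classic.
Proof. by apply/seteqP; split => w /=; rewrite in_itv /= ?andbT. Qed.

Lemma mset_le j x : measurable [set w | u j w <= x].
Proof. by rewrite set_le; apply: measurable_funPTI; exact: measurable_itv. Qed.

Lemma Pu_le j x : 0 <= x <= 1 -> P [set w | u j w <= x] = x%:E.
Proof.
move=> /andP[x0 x1]; rewrite set_le (Hu.2 j _ (measurable_itv _)).
have -> : (`]-oo, x]%classic `&` `[0, 1]%classic) = `[0, x]%classic :> set R.
  apply/seteqP; split => r /=; rewrite !in_itv /=.
    by move=> [rx /andP[r0 _]]; rewrite r0 rx.
  by move=> /andP[r0 rx]; rewrite rx r0 (le_trans rx x1).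
rewrite lebesgue_measure_itv /= lte_fin.
have [x0'|] := ltP 0 x; first by rewrite ?sube0.
by move=> xle; have -> : x = 0 by apply/eqP; rewrite eq_le xle x0.
Qed.


Lemma Pu_le2 j k x y : j != k -> 0 <= x <= 1 -> 0 <= y <= 1 ->
  P ([set w | u j w <= x] `&` [set w | u k w <= y]) = (x * y)%:E.
Proof.
move=> jk hx hy.
pose B := fun i : 'I_n => if i == j then `]-oo, x]%classic else `]-oo, y]%classic : set R.
have mB : forall i, measurable (B i).
  by move=> i; rewrite /B; case: ifP => _; exact: measurable_itv.
have := Hu.1 [set j; k]%SET B mB.
have -> : \bigcap_(i in [set i | i \in [set j; k]%SET]) (u i @^-1` B i) =
    [set w | u j w <= x] `&` [set w | u k w <= y].
  apply/seteqP; split => w /=.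
    move=> h; split.
      by have := h j (set21 j k); rewrite /B eqxx /= in_itv /= ?andbT.
    by have := h k (set22 j k); rewrite /B eq_sym (negbTE jk) /= in_itv /= ?andbT.
  move=> [hj hk] i /=; rewrite !inE => /orP[] /eqP ->; rewrite /B.
    by rewrite eqxx /= in_itv /= hj.
  by rewrite eq_sym (negbTE jk) /= in_itv /= hk.
move=> ->.
rewrite big_setU1 ?big_set1 /=; last by rewrite inE.
rewrite /B eqxx eq_sym (negbTE jk) -!set_le !Pu_le //.
Qed.


Lemma Ex_z j x : 0 <= x <= 1 -> Ex (fun w => if u j w <= x then 1 else 0) x.
Proof.
move=> hx; apply: Ex_ext (Ex_ind (mset_le j x) (Pu_le j hx)) _ => w.
rewrite indicE; case: (boolP (u j w <= x)) => h.
  by rewrite mem_set.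
by rewrite memNset //= => h'; rewrite h' in h.
Qed.

Lemma Ex_zz j k x y : 0 <= x <= 1 -> 0 <= y <= 1 ->
  Ex (fun w => (if u j w <= x then 1 else 0) * (if u k w <= y then 1 else 0))
     (if j == k then Num.min x y else x * y).
Proof.
move=> hx hy; case: eqP => [<-|/eqP jk].
  have hm : 0 <= Num.min x y <= 1.
    case/andP: hx => x0 x1; case/andP: hy => y0 y1.
    by rewrite le_min x0 y0 /= ge_min x1.
  apply: Ex_ext (Ex_z j hm) _ => w.
  by rewrite le_min; case: (u j w <= x); case: (u j w <= y); rewrite ?mulr1 ?mulr0 ?mul0r.
have mI := measurableI _ _ (mset_le j x) (mset_le k y).
apply: Ex_ext (Ex_ind mI (Pu_le2 jk hx hy)) _ => w.
rewrite indicE; case: (boolP (u j w <= x)) => h1; case: (boolP (u k w <= y)) => h2.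
- by rewrite mem_set ?mulr1.
- by rewrite memNset ?mulr0 //= => -[_ h']; rewrite h' in h2.
- by rewrite memNset ?mul0r //= => -[h' _]; rewrite h' in h1.
- by rewrite memNset ?mul0r //= => -[h' _]; rewrite h' in h1.
Qed.


Variables (T : nat) (N : 'I_n -> {set 'I_n}) (p : 'I_T.+1 -> R).
Hypothesis hp : forall t, 0 <= p t <= 1.

Definition mean (beta : 'I_T.+1 -> R) (c0 : 'I_n -> R) (c : 'I_n -> 'I_n -> R) : R :=
  n%:R^-1 * \sum_(i < n) \sum_(t < T.+1) beta t * (c0 i + \sum_(j in N i) c i j * p t).

Lemma Ex_est beta c0 c : Ex (est u N p beta c0 c) (mean beta c0 c).
Proof.
rewrite /est /mean; apply: Ex_scale; apply: Ex_sum => i; apply: Ex_sum => t.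
apply: Ex_scale; rewrite /Y; apply: Ex_add; first exact: Ex_cst.
apply: Ex_sum => j; apply: Ex_scale; exact: Ex_z.
Qed.


Definition zz j t w : R := if u j w <= p t then 1 else 0.
Definition hh (beta : 'I_T.+1 -> R) j w := \sum_(t < T.+1) beta t * (zz j t w - p t).
Definition DD (c : 'I_n -> 'I_n -> R) j := n%:R^-1 * \sum_(i < n) (if j \in N i then c i j else 0).
Definition VV (beta : 'I_T.+1 -> R) :=
  \sum_(t < T.+1) \sum_(s < T.+1) beta t * beta s * (Num.min (p t) (p s) - p t * p s).

Lemma Ex_hh beta j k : Ex (fun w => hh beta j w * hh beta k w) (if j == k then VV beta else 0).
Proof.
pose q t s := if j == k then Num.min (p t) (p s) else p t * p s.
have E1 : forall t s, Ex (fun w => beta t * beta s * (zz j t w * zz k s w + (- p s * zz j t w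
   + (- p t * zz k s w + p t * p s))))
   (beta t * beta s * (q t s + (- p s * p t + (- p t * p s + p t * p s)))).
  move=> t s; apply: Ex_scale; apply: Ex_add; first exact: Ex_zz.
  apply: Ex_add; first by apply: Ex_scale; exact: Ex_z.
  apply: Ex_add; first by apply: Ex_scale; exact: Ex_z.
  exact: Ex_cst.
have E2 := Ex_sum (index_enum _) xpredT (fun t => Ex_sum (index_enum _) xpredT (E1 t)).
apply: (Ex_ext (r := _)) => [|w].
  have -> : (if j == k then VV beta else 0) =
      \sum_(t < T.+1) \sum_(s < T.+1) beta t * beta s * (q t s + (- p s * p t + (- p t * p s + p t * p s))).
    rewrite /q /VV; case: eqP => _.
      by apply: eq_bigr => t _; apply: eq_bigr => s _; ring.
    by rewrite big1 // => t _; rewrite big1 // => s _; ring.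
  exact: E2.
rewrite /hh mulr_suml; apply: eq_bigr => t _; rewrite mulr_sumr; apply: eq_bigr => s _.
rewrite /zz; ring.
Qed.


Lemma est_dec beta c0 c w :
  est u N p beta c0 c w - mean beta c0 c = \sum_(j < n) DD c j * hh beta j w.
Proof.
rewrite /est /mean -mulrBr -sumrB.
have -> : \sum_(j < n) DD c j * hh beta j w =
   n%:R^-1 * \sum_(j < n) \sum_(i < n) (if j \in N i then c i j else 0) * hh beta j w.
  rewrite mulr_sumr; apply: eq_bigr => j _; rewrite /DD -mulrA mulr_suml.
  by [].
congr (_ * _); rewrite exchange_big /=; apply: eq_bigr => i _.
rewrite -sumrB.
transitivity (\sum_(t < T.+1) \sum_(j in N i) beta t * (c i j * (zz j t w - p t))).
  apply: eq_bigr => t _; rewrite -mulrBr /Y opprD addrACA subrr add0r -sumrB mulr_sumr.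
  by apply: eq_bigr => j _; rewrite /zz /zt; ring.
rewrite exchange_big /= big_mkcond /=; apply: eq_bigr => j _.
case: ifP => _; last by rewrite mul0r.
rewrite /hh mulr_sumr; apply: eq_bigr => t _; ring.
Qed.

Lemma var_est beta c0 c :
  'V_P[est u N p beta c0 c]%E = ((\sum_(j < n) DD c j ^+ 2) * VV beta)%:E.
Proof.
have [_ Em] := Ex_est beta c0 c.
rewrite /variance unlock Em /=.
suff : Ex (fun w => (est u N p beta c0 c w - mean beta c0 c) * (est u N p beta c0 c w - mean beta c0 c))
    ((\sum_(j < n) DD c j ^+ 2) * VV beta) by case.
have E1 := Ex_sum (index_enum _) xpredT (fun j => Ex_sum (index_enum _) xpredT
   (fun k => Ex_scale (DD c j * DD c k) (Ex_hh beta j k))).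
apply: (Ex_ext (r := _)) => [|w].
  have -> : (\sum_(j < n) DD c j ^+ 2) * VV beta = \sum_(j < n) \sum_(k < n)
     DD c j * DD c k * (if j == k then VV beta else 0).
    rewrite mulr_suml; apply: eq_bigr => j _.
    rewrite (bigD1 j) //= eqxx big1 ?addr0; first by rewrite expr2.
    by move=> k /negbTE; rewrite eq_sym => ->; rewrite mulr0.
  exact: E1.
rewrite est_dec mulr_suml; apply: eq_bigr => j _; rewrite mulr_sumr.
by apply: eq_bigr => k _; ring.
Qed.

End Infra.
Section Alg.
Variables (R : realType) (T : nat) (p : 'I_T.+1 -> R).
Hypothesis T0 : (0 < T)%N.
Hypothesis pmono : forall s t : 'I_T.+1, (s < t)%N -> p s < p t.

Definition Asum (b : 'I_T.+1 -> R) := \sum_(t < T.+1) b t.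
Definition Ssum (b : 'I_T.+1 -> R) := \sum_(t < T.+1) b t * p t.
Definition Qsum (b : 'I_T.+1 -> R) :=
  \sum_(t < T.+1) \sum_(s < T.+1) b t * b s * Num.min (p t) (p s).
Definition wk (k : 'I_T) := p (lift ord0 k) - p (widen_ord (leqnSn T) k).
Definition Bn (b : 'I_T.+1 -> R) (m : nat) := \sum_(t < T.+1) (m < t)%:R * b t.

Lemma le_p (s t : 'I_T.+1) : (s <= t)%N -> p s <= p t.
Proof.
rewrite leq_eqVlt => /orP[/eqP h|h]; last exact/ltW/pmono.
by have -> : s = t by apply: val_inj.
Qed.

Lemma tele (t : 'I_T.+1) : p t = p ord0 + \sum_(k < T) (k < t)%:R * wk k.
Proof.
pose pn m := p (inord m).
have e : forall k : 'I_T, wk k = pn k.+1 - pn k.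
  move=> k; rewrite /wk /pn; congr (p _ - p _); apply: val_inj;
  rewrite /= inordK //; [exact: ltn_ord | exact: (ltnW (ltn_ord k))].
under eq_bigr => k _ do rewrite e.
rewrite -(big_mkord xpredT (fun k => (k < t)%:R * (pn k.+1 - pn k))).
have tT : (t <= T)%N by rewrite -ltnS.
rewrite (big_cat_nat (leq0n t) tT) /=.
rewrite [X in _ = _ + (_ + X)]big1_seq ?addr0; last first.
  move=> k /andP[_]; rewrite mem_index_iota => /andP[tk _].
  by rewrite ltnNge tk mul0r.
rewrite big_nat_cond (eq_bigr (fun k => pn k.+1 - pn k)); last first.
  by move=> k /andP[/andP[_ ->] _]; rewrite mul1r.
rewrite -big_nat_cond telescope_sumr // /pn.
have -> : (inord t : 'I_T.+1) = t by apply: val_inj; rewrite /= inordK.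
have -> : (inord 0 : 'I_T.+1) = ord0 by apply: val_inj; rewrite /= inordK.
by rewrite addrC subrK.
Qed.

Lemma min_tele (t s : 'I_T.+1) :
  Num.min (p t) (p s) = p ord0 + \sum_(k < T) ((k < t)%:R * (k < s)%:R) * wk k.
Proof.
case: (leqP t s) => h.
  rewrite min_l ?le_p // tele; congr (_ + _); apply: eq_bigr => k _.
  case: (ltnP k t) => kt; last by rewrite !mul0r.
  by rewrite (leq_trans kt h) mulr1.
rewrite minC min_l ?le_p ?(ltnW h) // tele; congr (_ + _); apply: eq_bigr => k _.
case: (ltnP k s) => ks; last by rewrite mulr0 mul0r.
by rewrite (ltn_trans ks h) !mul1r.
Qed.

Lemma S_B b : Ssum b = p ord0 * Asum b + \sum_(k < T) wk k * Bn b k.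
Proof.
rewrite /Ssum /Asum /Bn mulr_sumr.
under eq_bigr => t _ do rewrite tele mulrDr mulr_sumr.
rewrite big_split /=; congr (_ + _); first by apply: eq_bigr => t _; rewrite mulrC.
rewrite exchange_big /=; apply: eq_bigr => k _; rewrite mulr_sumr.
by apply: eq_bigr => t _; ring.
Qed.

Lemma Q_B b : Qsum b = p ord0 * Asum b ^+ 2 + \sum_(k < T) wk k * Bn b k ^+ 2.
Proof.
rewrite /Qsum /Asum /Bn.
have -> : p ord0 * (\sum_(t < T.+1) b t) ^+ 2 =
    \sum_(t < T.+1) \sum_(s < T.+1) p ord0 * (b t * b s).
  rewrite expr2 mulr_suml mulr_sumr; apply: eq_bigr => t _; rewrite mulr_sumr mulr_sumr.
  by apply: eq_bigr => s _; ring.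
have -> : \sum_(k < T) wk k * ((\sum_(t < T.+1) (k < t)%:R * b t) ^+ 2) =
   \sum_(t < T.+1) \sum_(s < T.+1) \sum_(k < T) wk k * (((k < t)%:R * b t) * ((k < s)%:R * b s)).
  transitivity (\sum_(k < T) \sum_(t < T.+1) \sum_(s < T.+1)
      wk k * (((k < t)%:R * b t) * ((k < s)%:R * b s))).
    apply: eq_bigr => k _; rewrite expr2 mulr_suml mulr_sumr; apply: eq_bigr => t _.
    by rewrite mulr_sumr mulr_sumr; apply: eq_bigr => s _; ring.
  by rewrite exchange_big /=; apply: eq_bigr => t _; rewrite exchange_big.
rewrite -big_split /=; apply: eq_bigr => t _.
rewrite -big_split /=; apply: eq_bigr => s _.
rewrite min_tele mulrDr mulr_sumr; congr (_ + _); first by ring.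
by apply: eq_bigr => k _; ring.
Qed.

Lemma Wsum : \sum_(k < T) wk k = p ord_max - p ord0.
Proof.
rewrite (tele ord_max) addrC addKr; apply: eq_bigr => k _.
by rewrite /= ltn_ord mul1r.
Qed.

Lemma wk_gt0 k : 0 < wk k.
Proof. by rewrite /wk subr_gt0; apply: pmono => /=. Qed.


Let W := p ord_max - p ord0.

Lemma W_gt0 : 0 < W.
Proof. by rewrite /W subr_gt0; apply: pmono => /=. Qed.

Lemma CS_id (B : 'I_T -> R) : \sum_(k < T) wk k * B k = 1 ->
  \sum_(k < T) wk k * (B k - W^-1) ^+ 2 = \sum_(k < T) wk k * B k ^+ 2 - W^-1.
Proof.
move=> S1.
rewrite (eq_bigr (fun k => wk k * B k ^+ 2 - (2 * W^-1) * (wk k * B k) + W^-1 ^+ 2 * wk k));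
  last by move=> k _; ring.
rewrite big_split sumrB /= -!mulr_sumr S1 Wsum -/W.
have := W_gt0; rewrite lt0r => /andP[W0 _].
by field.
Qed.

Lemma CS_ge (B : 'I_T -> R) : \sum_(k < T) wk k * B k = 1 ->
  W^-1 <= \sum_(k < T) wk k * B k ^+ 2.
Proof.
move=> S1; have := CS_id S1; rewrite -subr_ge0 => <-.
apply: sumr_ge0 => k _; apply: mulr_ge0; [exact: ltW (wk_gt0 k) | exact: sqr_ge0].
Qed.

Lemma CS_eq (B : 'I_T -> R) : \sum_(k < T) wk k * B k = 1 ->
  \sum_(k < T) wk k * B k ^+ 2 <= W^-1 -> forall k, B k = W^-1.
Proof.
move=> S1 Q1 k.
have h0 : \sum_(k < T) wk k * (B k - W^-1) ^+ 2 = 0.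
  apply/eqP; rewrite eq_le; apply/andP; split; first by rewrite (CS_id S1) subr_le0.
  apply: sumr_ge0 => i _; apply: mulr_ge0; [exact: ltW (wk_gt0 i) | exact: sqr_ge0].
have := @psumr_eq0P _ _ _ _ (fun i _ => mulr_ge0 (ltW (wk_gt0 i)) (sqr_ge0 (B i - W^-1))) h0 k isT.
move/eqP; rewrite mulf_eq0 (negbTE (lt0r_neq0 (wk_gt0 k))) /= sqrf_eq0 subr_eq0.
by move/eqP.
Qed.


Lemma max_neq0 : (ord_max != ord0 :> 'I_T.+1).
Proof. by rewrite -(inj_eq val_inj) /= -lt0n. Qed.

Lemma sum_alpha (f : 'I_T.+1 -> R) :
  \sum_(t < T.+1) f t * alpha_opt p t = (f ord_max - f ord0) * W^-1.
Proof.
rewrite (bigD1 ord0) //= (bigD1 ord_max) /=; last exact: max_neq0.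
rewrite big1 ?addr0; last first.
  by move=> t /andP[/negbTE h1 /negbTE h2]; rewrite /alpha_opt h1 h2 mulr0.
rewrite /alpha_opt eqxx (negbTE max_neq0) eqxx -/W; ring.
Qed.

Lemma alpha_A : Asum (alpha_opt p) = 0.
Proof.
rewrite /Asum (eq_bigr (fun t => 1 * alpha_opt p t)); last by move=> t _; rewrite mul1r.
by rewrite sum_alpha subrr mul0r.
Qed.

Lemma alpha_B (k : 'I_T) : Bn (alpha_opt p) k = W^-1.
Proof. by rewrite /Bn sum_alpha /= ltn_ord subr0 mul1r. Qed.

Lemma alpha_S : Ssum (alpha_opt p) = 1.
Proof.
rewrite S_B alpha_A mulr0 add0r (eq_bigr (fun k => wk k * W^-1)); last first.
  by move=> k _; rewrite alpha_B.
by rewrite -mulr_suml Wsum -/W mulfV // lt0r_neq0 // W_gt0.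
Qed.

Lemma alpha_Q : Qsum (alpha_opt p) = W^-1.
Proof.
rewrite Q_B alpha_A expr0n mulr0 add0r (eq_bigr (fun k => wk k * W^-1 ^+ 2)); last first.
  by move=> k _; rewrite alpha_B.
rewrite -mulr_suml Wsum -/W.
have := W_gt0; rewrite lt0r => /andP[W0 _].
by field.
Qed.

Lemma Bn_diff b m : (m < T)%N -> Bn b m - Bn b m.+1 = b (inord m.+1).
Proof.
move=> mT.
transitivity (\sum_(t < T.+1) (t == inord m.+1 :> 'I_T.+1)%:R * b t).
  rewrite /Bn -sumrB; apply: eq_bigr => t _; rewrite -mulrBl; congr (_ * _).
  have -> : (t == inord m.+1 :> 'I_T.+1) = (t == m.+1 :> nat).
    by rewrite -(inj_eq val_inj) /= inordK.
  have : (m < t)%N = (t == m.+1 :> nat) || (m.+1 < t)%N by lia.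
  case E1: (t == m.+1 :> nat); case E2: (m.+1 < t)%N => /= ->.
  - by move/eqP: E1 => E1; rewrite E1 ltnn in E2.
  - by rewrite subr0.
  - by rewrite subrr.
  - by rewrite subrr.
rewrite (bigD1 (inord m.+1)) //= eqxx mul1r big1 ?addr0 //.
by move=> t /negbTE ->; rewrite mul0r.
Qed.

Lemma BnT b : Bn b T = 0.
Proof.
by rewrite /Bn big1 // => t _; rewrite ltnNge -ltnS ltn_ord mul0r.
Qed.

Lemma recover b : Asum b = 0 -> (forall k : 'I_T, Bn b k = W^-1) ->
  forall t, b t = alpha_opt p t.
Proof.
move=> A0 HB t.
have HBm : forall m, (m < T)%N -> Bn b m = W^-1 by move=> m mT; exact: (HB (Ordinal mT)).
rewrite /alpha_opt; case: eqP => [->|/eqP t0].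
  have : Asum b = b ord0 + Bn b 0.
    rewrite /Asum /Bn (bigD1 ord0) //= [X in _ = _ + X](bigD1 ord0) //= mul0r add0r.
    congr (_ + _); apply: eq_bigr => s s0; rewrite lt0n.
    by have -> : (s != 0 :> nat) by []; rewrite mul1r.
  rewrite A0 HBm // => /eqP; rewrite eq_sym addr_eq0 => /eqP ->; by [].
have tm : t = inord (t.-1).+1.
  apply: val_inj; rewrite /= prednK ?inordK ?lt0n //.
have t1T : ((t.-1) < T)%N.
  by rewrite -ltnS prednK ?ltn_ord // lt0n; move: t0; rewrite -(inj_eq val_inj).
rewrite {1}tm -Bn_diff //; case: eqP => [tM|/eqP tM].
  have -> : (t.-1).+1 = T.
    by rewrite prednK ?tM // lt0n; move: t0; rewrite -(inj_eq val_inj).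
  by rewrite BnT subr0 HBm.
rewrite !HBm ?subrr //.
rewrite prednK; last by rewrite lt0n; move: t0; rewrite -(inj_eq val_inj).
have : (t <= T)%N by rewrite -ltnS.
by rewrite leq_eqVlt => /orP[/eqP tT|//]; case/eqP: tM; apply: val_inj.
Qed.

End Alg.


Lemma sum_pos (R : realType) (I : finType) (F : I -> R) (i0 : I) :
  (forall i, 0 <= F i) -> 0 < F i0 -> 0 < \sum_i F i.
Proof.
move=> h0 h1; rewrite (bigD1 i0) //=; apply: (lt_le_trans h1).
by rewrite lerDl; apply: sumr_ge0 => i _.
Qed.

Theorem theorem4 (n T : nat) (N : 'I_n -> {set 'I_n})
  (d : measure_display) (Omega : measurableType d) (R : realType)
  (P : probability Omega R) (u : 'I_n -> {RV P >-> R}) (p : 'I_T.+1 -> R) :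
  (0 < n)%N -> (0 < T)%N ->
  0 <= p ord0 -> (forall s t : 'I_T.+1, (s < t)%N -> p s < p t) -> p ord_max <= 1 ->
  iid_uniform01 P u ->
  unbiased P u N p (alpha_opt p) /\
  (forall (beta : 'I_T.+1 -> R) (c0 : 'I_n -> R) (c : 'I_n -> 'I_n -> R),
     unbiased P u N p beta ->
     ('V_P[est u N p (alpha_opt p) c0 c] <= 'V_P[est u N p beta c0 c])%E) /\
  (forall beta : 'I_T.+1 -> R,
     unbiased P u N p beta ->
     (exists i j, j \in N i) ->
     (forall (c0 : 'I_n -> R) (c : 'I_n -> 'I_n -> R),
        ('V_P[est u N p beta c0 c] <= 'V_P[est u N p (alpha_opt p) c0 c])%E) ->
     forall t, beta t = alpha_opt p t).
Proof.
move=> n0 T0 p0 pm p1 Hu.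
have hp : forall t, 0 <= p t <= 1.
  move=> t; rewrite (le_trans p0 (@le_p _ _ _ pm ord0 t (leq0n t))) /=.
  by apply: le_trans p1; apply: (@le_p _ _ _ pm t ord_max); rewrite -ltnS.
have VVe : forall b, VV p b = Qsum p b - Ssum p b ^+ 2.
  move=> b; rewrite /VV /Qsum /Ssum expr2 mulr_suml -sumrB; apply: eq_bigr => t _.
  rewrite mulr_sumr -sumrB; apply: eq_bigr => s _; ring.
have mean_e : forall b c0 c, mean N p b c0 c =
    n%:R^-1 * \sum_(i < n) (Asum b * c0 i + Ssum p b * \sum_(j in N i) c i j).
  move=> b c0 c; rewrite /mean; congr (_ * _); apply: eq_bigr => i _.
  rewrite /Asum /Ssum; under eq_bigr => t _ do rewrite mulrDr.
  rewrite big_split /= mulr_suml; congr (_ + _).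
  rewrite mulr_sumr; under eq_bigr => t _ do rewrite mulr_sumr.
  rewrite exchange_big /=; apply: eq_bigr => j _; rewrite mulr_suml.
  by apply: eq_bigr => t _; ring.
have TTE_e : forall (c0 : 'I_n -> R) (c : 'I_n -> 'I_n -> R), TTE N c0 c = n%:R^-1 * \sum_(i < n) \sum_(j in N i) c i j.
  move=> c0 c; rewrite /TTE; congr (_ * _); apply: eq_bigr => i _.
  rewrite /Y opprD addrACA subrr add0r -sumrB; apply: eq_bigr => j _; ring.
have n0' : n%:R != 0 :> R by rewrite pnatr_eq0 -lt0n.
have unb : forall b (c0 : 'I_n -> R) (c : 'I_n -> 'I_n -> R), unbiased P u N p b -> mean N p b c0 c = TTE N c0 c.
  move=> b c0 c Hb; have [_ E] := Ex_est Hu N hp b c0 c.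
  have H := Hb c0 c; rewrite E in H; by case: H.
have unb_A : forall b, unbiased P u N p b -> Asum b = 0.
  move=> b Hb; have := unb b (fun _ => 1) (fun _ _ => 0) Hb.
  rewrite mean_e TTE_e [X in _ = _ * X -> _]big1 ?mulr0; last by move=> i _; rewrite big1.
  under eq_bigr => i _ do rewrite big1 // mulr1 mulr0 addr0.
  rewrite sumr_const card_ord => /eqP; rewrite mulf_eq0 invr_eq0 (negbTE n0') /= mulrn_eq0 => /orP[|/eqP //]; by rewrite eqn0Ngt n0.
have edgeX : forall (i0 j0 : 'I_n), j0 \in N i0 ->
    0 < n%:R^-1 * \sum_(i < n) \sum_(j in N i) (1 : R).
  move=> i0 j0 h; apply: mulr_gt0; first by rewrite invr_gt0 ltr0n.
  apply: (@sum_pos _ _ _ i0) => [i|]; first by apply: sumr_ge0.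
  rewrite big_mkcond /=; apply: (@sum_pos _ _ _ j0) => [j|]; first by case: ifP.
  by rewrite h.
have unb_S : forall b, unbiased P u N p b -> (exists i j, j \in N i) -> Ssum p b = 1.
  move=> b Hb [i0 [j0 h]]; have := unb b (fun _ => 0) (fun _ _ => 1) Hb.
  rewrite mean_e TTE_e; under eq_bigr => i _ do rewrite mulr0 add0r.
  rewrite -mulr_sumr mulrCA => /eqP; rewrite -subr_eq0 -[X in _ - X]mul1r -mulrBl.
  by rewrite mulf_eq0 (negbTE (lt0r_neq0 (edgeX _ _ h))) orbF subr_eq0 => /eqP.
have unb_alpha : unbiased P u N p (alpha_opt p).
  move=> c0 c; have [_ ->] := Ex_est Hu N hp (alpha_opt p) c0 c.
  rewrite mean_e TTE_e alpha_A // alpha_S //.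
  by congr (_%:E); congr (_ * _); apply: eq_bigr => i _; rewrite mul0r add0r mul1r.
have VValpha : VV p (alpha_opt p) = (p ord_max - p ord0)^-1 - 1.
  by rewrite VVe alpha_Q // alpha_S // expr1n.
have QB : forall b, unbiased P u N p b -> (exists i j, j \in N i) ->
    \sum_(k < T) wk p k * Bn b k = 1 /\ Qsum p b = \sum_(k < T) wk p k * Bn b k ^+ 2.
  move=> b Hb E; split.
    by move: (unb_S b Hb E); rewrite S_B (unb_A b Hb) mulr0 add0r.
  by rewrite (Q_B pm) (unb_A b Hb) expr0n mulr0 add0r.
split; first exact: unb_alpha.
split.
  move=> b c0 c Hb; rewrite !var_est // lee_fin.
  case: (pselect (exists i j, j \in N i)) => E.
    apply: ler_wpM2l; first by apply: sumr_ge0 => j _; exact: sqr_ge0.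
    rewrite VValpha VVe unb_S // expr1n lerD2r.
    have [S1 ->] := QB b Hb E; exact: CS_ge.
  rewrite big1 ?mul0r // => j _.
  rewrite /DD big1 ?mulr0 ?expr0n // => i _; case: ifP => // h.
  by exfalso; apply: E; exists i, j.
move=> b Hb E Hle; have := Hle (fun _ => 0) (fun _ _ => 1).
rewrite !var_est // lee_fin.
case: E => [i0 [j0 h]].
have Dpos : 0 < \sum_(j < n) DD N (fun _ _ => 1 : R) j ^+ 2.
  apply: (@sum_pos _ _ _ j0) => [j|]; first exact: sqr_ge0.
  rewrite exprn_gt0 // /DD; apply: mulr_gt0; first by rewrite invr_gt0 ltr0n.
  by apply: (@sum_pos _ _ _ i0) => [i|]; [case: ifP | rewrite h].
rewrite ler_pM2l // VValpha VVe unb_S //; last by exists i0, j0.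
rewrite expr1n lerD2r.
have [S1 Qe] := QB b Hb (ex_intro _ i0 (ex_intro _ j0 h)).
rewrite Qe => Q1.
apply: recover => //; first exact: unb_A.
exact: CS_eq.
Qed.
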